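(* Let $\mathcal{C}$ be a Fraïssé class with Fraïssé limit $\mathbf{U}$. Then $\mathbf{U}$ has a universal homogeneous endomorphism if and only if $\mathcal{C}$ has the amalgamated extension property and the homo amalgamation property (HAP).
   Context: An embedding is an injective homomorphism reflecting all relations. An age is a class of finitely generated structures of one signature with countably many isomorphism types, closed under finitely generated substructures (up to isomorphism) and with the joint embedding property; $\overline{\mathcal{C}}$ is the class of countable structures all of whose finitely generated substructures are isomorphic to members of $\mathcal{C}$; a Fraïssé class is an age with the amalgamation property and its Fraïssé limit is the unique countable homogeneous structure with that age. A universal homogeneous endomorphism of $\mathbf{U}$ is an endomorphism $u$ such that for every $\mathbf{A}\in\overline{\operatorname{Age}(\mathbf{U})}$ and homomorphism $h:\mathbf{A}\to\mathbf{U}$ there is an embedding $\iota:\mathbf{A}\hookrightarrow\mathbf{U}$ with $h=u\circ\iota$, and for every finitely generated $\mathbf{A}\le\mathbf{U}$ and embedding $\iota:\mathbf{A}\hookrightarrow\mathbf{U}$ with $u\circ\iota=u\restriction_A$ there is an automorphism $\alpha$ of $\mathbf{U}$ with $u\circ\alpha=u$ and $\alpha\restriction_A=\iota$. $\mathcal{C}$ has the amalgamated extension property if for all $\mathbf{A},\mathbf{B}_1,\mathbf{B}_2,\mathbf{T}\in\mathcal{C}$, embeddings $f_i:\mathbf{A}\hookrightarrow\mathbf{B}_i$ and homomorphisms $h_i:\mathbf{B}_i\to\mathbf{T}$ with $h_1f_1=h_2f_2$ there exist $\mathbf{C},\mathbf{T}'\in\mathcal{C}$, embeddings $g_i:\mathbf{B}_i\hookrightarrow\mathbf{C}$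 with $g_1f_1=g_2f_2$, an embedding $k:\mathbf{T}\hookrightarrow\mathbf{T}'$ and a homomorphism $h:\mathbf{C}\to\mathbf{T}'$ with $hg_i=kh_i$. $\mathcal{C}$ has the HAP if for all $\mathbf{A},\mathbf{B}_1,\mathbf{B}_2\in\mathcal{C}$, every embedding $f_1:\mathbf{A}\hookrightarrow\mathbf{B}_1$ and homomorphism $f_2:\mathbf{A}\to\mathbf{B}_2$ there exist $\mathbf{C}\in\mathcal{C}$, an embedding $g_2:\mathbf{B}_2\hookrightarrow\mathbf{C}$ and a homomorphism $g_1:\mathbf{B}_1\to\mathbf{C}$ with $g_1\circ f_1=g_2\circ f_2$. *)

(* Defs.v *)
From Stdlib Require Import List Fin.
Set Implicit Arguments.

Record signature := Signature {
  fsym : Type; farity : fsym -> nat;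
  rsym : Type; rarity : rsym -> nat }.

Record structure (sg : signature) := Structure {
  carrier :> Type;
  fint : forall f : fsym sg, (Fin.t (@farity sg f) -> carrier) -> carrier;
  rint : forall r : rsym sg, (Fin.t (@rarity sg r) -> carrier) -> Prop }.
Arguments fint {sg} s f args.
Arguments rint {sg} s r args.

Section Maps.
Variable sg : signature.

Definition is_hom (A B : structure sg) (h : A -> B) : Prop :=
  (forall f args, h (fint A f args) = fint B f (fun i => h (args i))) /\
  (forall r args, rint A r args -> rint B r (fun i => h (args i))).

Definition is_emb (A B : structure sg) (h : A -> B) : Prop :=
  is_hom A B h /\ (forall x y, h x = h y -> x = y) /\
  (forall r args, rint B r (fun i => h (args i)) -> rint A r args).

Definition is_iso (A B : structure sg) (h : A -> B) : Prop :=
  is_emb A B h /\ (forall y, exists x, h x = y).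

Definition isomorphic (A B : structure sg) : Prop := exists h : A -> B, is_iso A B h.

Definition is_aut (A : structure sg) (h : A -> A) : Prop := is_iso A A h.

Inductive gen (A : structure sg) (s : list A) : A -> Prop :=
| gen_in : forall x, In x s -> gen A s x
| gen_fun : forall f args, (forall i, gen A s (args i)) -> gen A s (fint A f args).

Definition genSub (A : structure sg) (s : list A) : structure sg :=
  @Structure sg {x : A | gen A s x}
    (fun f args => exist _ (fint A f (fun i => proj1_sig (args i)))
                     (@gen_fun A s f _ (fun i => proj2_sig (args i))))
    (fun r args => rint A r (fun i => proj1_sig (args i))).

Definition fin_generated (A : structure sg) : Prop :=
  exists s : list A, forall x, gen A s x.

Definition countable_str (A : structure sg) : Prop :=
  exists c : A -> nat, forall x y, c x = c y -> x = y.

Definition cls := structure sg -> Prop.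

Definition age_of (U : structure sg) : cls :=
  fun A => exists s : list U, isomorphic A (genSub U s).

Definition cbar (C : cls) : cls :=
  fun A => countable_str A /\
    forall s : list A, exists B, C B /\ isomorphic (genSub A s) B.

Definition is_age (C : cls) : Prop :=
  (forall A, C A -> fin_generated A) /\
  (exists e : nat -> structure sg, forall A, C A -> exists n, isomorphic A (e n)) /\
  (forall A, C A -> forall (s : list A) B, isomorphic B (genSub A s) -> C B) /\
  (forall A B, C A -> C B -> exists D, C D /\
      (exists g : A -> D, is_emb A D g) /\ (exists g : B -> D, is_emb B D g)).

Definition amalgamation (C : cls) : Prop :=
  forall (A B1 B2 : structure sg) (f1 : A -> B1) (f2 : A -> B2),
    C A -> C B1 -> C B2 -> is_emb A B1 f1 -> is_emb A B2 f2 ->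
    exists (D : structure sg) (g1 : B1 -> D) (g2 : B2 -> D),
      C D /\ is_emb B1 D g1 /\ is_emb B2 D g2 /\
      forall a, g1 (f1 a) = g2 (f2 a).

Definition fraisse_class (C : cls) : Prop := is_age C /\ amalgamation C.

Definition homogeneous (U : structure sg) : Prop :=
  forall (s t : list U) (i : genSub U s -> genSub U t),
    is_iso (genSub U s) (genSub U t) i ->
    exists a : U -> U, is_aut U a /\ forall x, a (proj1_sig x) = proj1_sig (i x).

Definition fraisse_limit (C : cls) (U : structure sg) : Prop :=
  countable_str U /\ homogeneous U /\ forall A, C A <-> age_of U A.

Definition univ_hom_endo (U : structure sg) (u : U -> U) : Prop :=
  is_hom U U u /\
  (forall (A : structure sg) (h : A -> U), cbar (age_of U) A -> is_hom A U h ->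
     exists io : A -> U, is_emb A U io /\ forall a, h a = u (io a)) /\
  (forall (s : list U) (io : genSub U s -> U),
     is_emb (genSub U s) U io -> (forall a, u (io a) = u (proj1_sig a)) ->
     exists al : U -> U, is_aut U al /\ (forall x, u (al x) = u x) /\
       forall a, al (proj1_sig a) = io a).

Definition AEP (C : cls) : Prop :=
  forall (A B1 B2 T : structure sg) (f1 : A -> B1) (f2 : A -> B2)
         (h1 : B1 -> T) (h2 : B2 -> T),
    C A -> C B1 -> C B2 -> C T -> is_emb A B1 f1 -> is_emb A B2 f2 ->
    is_hom B1 T h1 -> is_hom B2 T h2 -> (forall a, h1 (f1 a) = h2 (f2 a)) ->
    exists (D T' : structure sg) (g1 : B1 -> D) (g2 : B2 -> D) (k : T -> T') (h : D -> T'),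
      C D /\ C T' /\ is_emb B1 D g1 /\ is_emb B2 D g2 /\
      (forall a, g1 (f1 a) = g2 (f2 a)) /\ is_emb T T' k /\ is_hom D T' h /\
      (forall b, h (g1 b) = k (h1 b)) /\ (forall b, h (g2 b) = k (h2 b)).

Definition HAP (C : cls) : Prop :=
  forall (A B1 B2 : structure sg) (f1 : A -> B1) (f2 : A -> B2),
    C A -> C B1 -> C B2 -> is_emb A B1 f1 -> is_hom A B2 f2 ->
    exists (D : structure sg) (g1 : B1 -> D) (g2 : B2 -> D),
      C D /\ is_emb B2 D g2 /\ is_hom B1 D g1 /\
      forall a, g1 (f1 a) = g2 (f2 a).

End Maps.

(* Main.v *)
Require Import Defs.
From Stdlib Require Import List Fin.
From Stdlib Require Import Classical ClassicalEpsilon ProofIrrelevance FunctionalExtensionality Arith Lia Cantor.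
From Stdlib Require Import PropExtensionality.

Section Infra.
Variable sg : signature.
Notation str := (structure sg).

Definition hom_on (X Y : str) (P : X -> Prop) (f : X -> Y) : Prop :=
  (forall fs args, (forall i, P (args i)) -> f (fint X fs args) = fint Y fs (fun i => f (args i))) /\
  (forall r args, (forall i, P (args i)) -> rint X r args -> rint Y r (fun i => f (args i))).

Definition emb_on (X Y : str) (P : X -> Prop) (f : X -> Y) : Prop :=
  hom_on X Y P f /\ (forall x y, P x -> P y -> f x = f y -> x = y) /\
  (forall r args, (forall i, P (args i)) -> rint Y r (fun i => f (args i)) -> rint X r args).

Definition closed (X : str) (P : X -> Prop) : Prop :=
  forall fs args, (forall i, P (args i)) -> P (fint X fs args).

Definition img {X Y : Type} (P : X -> Prop) (e : X -> Y) (y : Y) : Prop := exists x, P x /\ e x = y.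

Lemma fin_choice {A : Type} n (Q : Fin.t n -> A -> Prop) :
  (forall i, exists a, Q i a) -> exists F : Fin.t n -> A, forall i, Q i (F i).
Proof.
  intro H. exists (fun i => proj1_sig (constructive_indefinite_description _ (H i))).
  intro i. exact (proj2_sig (constructive_indefinite_description _ (H i))).
Qed.

Lemma gen_closed (X : str) l : closed X (gen X l).
Proof. intros fs args H. now apply gen_fun. Qed.

Lemma gen_min (X : str) l (P : X -> Prop) : closed X P -> (forall x, In x l -> P x) ->
  forall x, gen X l x -> P x.
Proof. intros Hc Hl x H. induction H; auto. Qed.

Lemma gen_mono (X : str) l l' : (forall x, In x l -> gen X l' x) -> forall x, gen X l x -> gen X l' x.
Proof. intros H. apply gen_min; auto. apply gen_closed. Qed.

Lemma gen_app_l (X : str) l l' x : gen X l x -> gen X (l ++ l') x.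
Proof. apply gen_mono. intros y Hy. apply gen_in. apply in_or_app. auto. Qed.
Lemma gen_app_r (X : str) l l' x : gen X l' x -> gen X (l ++ l') x.
Proof. apply gen_mono. intros y Hy. apply gen_in. apply in_or_app. auto. Qed.
Lemma gen_cons (X : str) a l x : gen X l x -> gen X (a :: l) x.
Proof. apply gen_mono. intros y Hy. apply gen_in. now right. Qed.

Lemma gen_image (X Y : str) l (f : X -> Y) : hom_on X Y (gen X l) f ->
  forall x, gen X l x -> gen Y (map f l) (f x).
Proof.
  intros [Hf _] x H. induction H.
  - apply gen_in. now apply in_map.
  - rewrite Hf by auto. apply gen_fun. auto.
Qed.

Lemma gen_image_inv (X Y : str) l (f : X -> Y) : hom_on X Y (gen X l) f ->
  forall y, gen Y (map f l) y -> img (gen X l) f y.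
Proof.
  intros Hf y H. induction H as [y Hy| fs args _ IH].
  - apply in_map_iff in Hy. destruct Hy as [x [<- Hx]]. exists x. split; auto. now apply gen_in.
  - destruct (fin_choice _ (fun i x => gen X l x /\ f x = args i) IH) as [xs Hxs].
    exists (fint X fs xs). split.
    + apply gen_fun. intro i. apply Hxs.
    + rewrite (proj1 Hf) by (intro i; apply Hxs). f_equal. apply functional_extensionality.
      intro i. apply Hxs.
Qed.

Lemma img_gen (X Y : str) l (f : X -> Y) : hom_on X Y (gen X l) f ->
  forall y, gen Y (map f l) y <-> img (gen X l) f y.
Proof.
  intros Hf y; split. apply gen_image_inv; auto.
  intros [x [Hx <-]]. now apply gen_image.
Qed.

Lemma agree_gen (X Y : str) l (f g : X -> Y) : hom_on X Y (gen X l) f -> hom_on X Y (gen X l) g ->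
  (forall x, In x l -> f x = g x) -> forall x, gen X l x -> f x = g x.
Proof.
  intros Hf Hg Hl x H. induction H as [x Hx| fs args Ha IH]; auto.
  rewrite (proj1 Hf) by auto. rewrite (proj1 Hg) by auto. f_equal.
  apply functional_extensionality. auto.
Qed.

Lemma hom_on_mono (X Y : str) (P Q : X -> Prop) f : (forall x, Q x -> P x) -> hom_on X Y P f -> hom_on X Y Q f.
Proof. intros H [H1 H2]. split; intros; auto. Qed.
Lemma emb_on_mono (X Y : str) (P Q : X -> Prop) f : (forall x, Q x -> P x) -> emb_on X Y P f -> emb_on X Y Q f.
Proof. intros H [H1 [H2 H3]]. split; [|split]; intros; eauto using hom_on_mono. Qed.
Lemma hom_hom_on (X Y : str) P f : is_hom X Y f -> hom_on X Y P f.
Proof. intros [H1 H2]. split; intros; auto. Qed.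
Lemma emb_emb_on (X Y : str) P f : is_emb X Y f -> emb_on X Y P f.
Proof. intros [H1 [H2 H3]]. split; [|split]; intros; eauto using hom_hom_on. Qed.
Lemma hom_on_T (X Y : str) f : hom_on X Y (fun _ => True) f -> is_hom X Y f.
Proof. intros [H1 H2]. split; intros; auto. Qed.
Lemma emb_on_T (X Y : str) f : emb_on X Y (fun _ => True) f -> is_emb X Y f.
Proof. intros [H1 [H2 H3]]. split; [|split]; intros; eauto using hom_on_T. Qed.
Lemma emb_on_hom (X Y : str) P f : emb_on X Y P f -> hom_on X Y P f.
Proof. now intros []. Qed.

Lemma hom_on_comp (X Y Z : str) P Q f g : hom_on X Y P f -> hom_on Y Z Q g ->
  (forall x, P x -> Q (f x)) -> closed X P -> hom_on X Z P (fun x => g (f x)).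
Proof.
  intros [F1 F2] [G1 G2] H Hc. split.
  - intros fs args Ha. rewrite F1 by auto. rewrite G1 by auto. reflexivity.
  - intros r args Ha Hr. apply G2; auto.
Qed.
Lemma emb_on_comp (X Y Z : str) P Q f g : emb_on X Y P f -> emb_on Y Z Q g ->
  (forall x, P x -> Q (f x)) -> closed X P -> emb_on X Z P (fun x => g (f x)).
Proof.
  intros [F1 [F2 F3]] [G1 [G2 G3]] H Hc. split; [|split].
  - eapply hom_on_comp; eauto.
  - intros x y Hx Hy E. apply F2; auto.
  - intros r args Ha Hr. apply F3; [assumption|]. apply G3; auto.
Qed.

Lemma id_emb (X : str) : is_emb X X (fun x => x).
Proof. split; [split|split]; auto. Qed.

Definition push {X Y Z : Type} (P : X -> Prop) (e : X -> Y) (phi : X -> Z) (d : Y -> Z) (y : Y) : Z :=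
  match excluded_middle_informative (exists x, P x /\ e x = y) with
  | left H => phi (proj1_sig (constructive_indefinite_description _ H))
  | right _ => d y end.

Lemma push_eq {X Y Z : Type} (P : X -> Prop) (e : X -> Y) (phi : X -> Z) d :
  (forall x y, P x -> P y -> e x = e y -> x = y) -> forall x, P x -> push P e phi d (e x) = phi x.
Proof.
  intros Hi x Hx. unfold push. destruct excluded_middle_informative as [H|H].
  - destruct (constructive_indefinite_description _ H) as [x' [Hx' E]]. simpl. f_equal. auto.
  - exfalso. apply H. eauto.
Qed.

Lemma push_hom (X Y Z : str) P e phi d : emb_on X Y P e -> hom_on X Z P phi -> closed X P ->
  hom_on Y Z (img P e) (push P e phi d).
Proof.
  intros [[E1 E1'] [E2 E3]] [F1 F2] Hc.
  assert (Hch : forall n (args : Fin.t n -> Y), (forall i, img P e (args i)) ->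
     exists xs : Fin.t n -> X, (forall i, P (xs i)) /\ args = fun i => e (xs i)).
  { intros n args Ha. destruct (fin_choice _ (fun i x => P x /\ e x = args i) Ha) as [xs Hxs].
    exists xs. split. intro; apply Hxs. apply functional_extensionality. intro i. symmetry; apply Hxs. }
  split.
  - intros fs args Ha. destruct (Hch _ args Ha) as [xs [Hxs ->]].
    rewrite <- E1 by auto. rewrite push_eq by auto. rewrite F1 by auto. f_equal.
    apply functional_extensionality. intro i. symmetry. apply push_eq; auto.
  - intros r args Ha Hr. destruct (Hch _ args Ha) as [xs [Hxs ->]].
    replace (fun i => push P e phi d (e (xs i))) with (fun i => phi (xs i)).
    + apply F2; auto.
    + apply functional_extensionality. intro i. symmetry. apply push_eq; auto.
Qed.

Lemma push_emb (X Y Z : str) P e phi d : emb_on X Y P e -> emb_on X Z P phi -> closed X P ->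
  emb_on Y Z (img P e) (push P e phi d).
Proof.
  intros HE HF Hc. split; [|split].
  - apply push_hom; auto. apply HF.
  - intros y1 y2 [x1 [H1 <-]] [x2 [H2 <-]]. rewrite !push_eq by (auto; apply HE).
    intro E. f_equal. apply HF; auto.
  - destruct HE as [[E1 E2] [Ei E3]]. destruct HF as [[F1 F2] [Fi F3]].
    intros r args Ha Hr.
    destruct (fin_choice _ (fun i x => P x /\ e x = args i) Ha) as [xs Hxs].
    assert (Ea : args = fun i => e (xs i)).
    { apply functional_extensionality. intro i. symmetry; apply Hxs. }
    subst args. apply E2. intro; apply Hxs. apply F3. intro; apply Hxs.
    replace (fun i => phi (xs i)) with (fun i => push P e phi d (e (xs i))); auto.
    apply functional_extensionality. intro i. apply push_eq; auto. apply Hxs.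
Qed.


Definition extd {X Y : Type} (P : X -> Prop) (g : {x | P x} -> Y) (d : X -> Y) (x : X) : Y :=
  match excluded_middle_informative (P x) with left p => g (exist _ x p) | right _ => d x end.

Lemma extd_eq {X Y : Type} (P : X -> Prop) (g : {x | P x} -> Y) d x (p : P x) : extd P g d x = g (exist _ x p).
Proof.
  unfold extd. destruct excluded_middle_informative as [p'|n]. f_equal. f_equal. apply proof_irrelevance.
  contradiction.
Qed.

Lemma sig_eq {X : Type} (P : X -> Prop) (a b : {x | P x}) : proj1_sig a = proj1_sig b -> a = b.
Proof.
  destruct a as [a pa], b as [b pb]; simpl; intros ->. f_equal. apply proof_irrelevance.
Qed.

Lemma hom_genSub (X Y : str) l (g : genSub X l -> Y) d : is_hom (genSub X l) Y g ->
  hom_on X Y (gen X l) (extd (gen X l) g d).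
Proof.
  intros [G1 G2]. split.
  - intros fs args Ha. rewrite (extd_eq _ _ _ _ (@gen_fun _ X l fs args Ha)).
    pose proof (G1 fs (fun i => exist _ (args i) (Ha i))) as E. simpl in E.
    etransitivity; [|etransitivity; [exact E|]].
    + f_equal; try (apply sig_eq; reflexivity).
    + f_equal. apply functional_extensionality. intro i. symmetry. apply extd_eq.
  - intros r args Ha Hr.
    pose proof (G2 r (fun i => exist _ (args i) (Ha i)) Hr) as E. simpl in E.
    replace (fun i => extd (gen X l) g d (args i)) with (fun i => g (exist (gen X l) (args i) (Ha i))); auto.
    apply functional_extensionality. intro i. symmetry. apply extd_eq.
Qed.

Lemma emb_genSub (X Y : str) l (g : genSub X l -> Y) d : is_emb (genSub X l) Y g ->
  emb_on X Y (gen X l) (extd (gen X l) g d).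
Proof.
  intros [G [Gi G3]]. split; [|split].
  - apply hom_genSub; auto.
  - intros x y Hx Hy. rewrite (extd_eq _ _ _ _ Hx), (extd_eq _ _ _ _ Hy). intro E.
    apply Gi in E. apply (f_equal (@proj1_sig _ _)) in E. exact E.
  - intros r args Ha Hr.
    replace (fun i => extd (gen X l) g d (args i)) with (fun i => g (exist (gen X l) (args i) (Ha i))) in Hr.
    + exact (G3 r (fun i => exist _ (args i) (Ha i)) Hr).
    + apply functional_extensionality. intro i. symmetry. apply extd_eq.
Qed.

Lemma genSub_hom (X Y : str) l (f : X -> Y) : hom_on X Y (gen X l) f ->
  is_hom (genSub X l) Y (fun x => f (proj1_sig x)).
Proof.
  intros [F1 F2]. split.
  - intros fs args. simpl. apply F1. intro i. exact (proj2_sig (args i)).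
  - intros r args Hr. simpl in Hr. apply F2; auto. intro i. exact (proj2_sig (args i)).
Qed.

Lemma genSub_emb (X Y : str) l (f : X -> Y) : emb_on X Y (gen X l) f ->
  is_emb (genSub X l) Y (fun x => f (proj1_sig x)).
Proof.
  intros [F [Fi F3]]. split; [|split].
  - apply genSub_hom; auto.
  - intros x y E. apply sig_eq. apply Fi; auto. exact (proj2_sig x). exact (proj2_sig y).
  - intros r args Hr. simpl. apply F3; auto. intro i. exact (proj2_sig (args i)).
Qed.

Lemma proj_emb (X : str) l : is_emb (genSub X l) X (fun x => proj1_sig x).
Proof.
  apply (genSub_emb X X l (fun x => x)). apply emb_emb_on, id_emb.
Qed.

Definition cores {X Y : str} l (f : X -> Y) (H : forall x, gen Y l (f x)) : X -> genSub Y l :=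
  fun x => exist _ (f x) (H x).

Lemma cores_hom (X Y : str) l f H : is_hom X Y f -> is_hom X (genSub Y l) (@cores X Y l f H).
Proof.
  intros [F1 F2]. split.
  - intros fs args. apply sig_eq. simpl. apply F1.
  - intros r args Hr. simpl. apply F2. auto.
Qed.

Lemma cores_emb (X Y : str) l f H : is_emb X Y f -> is_emb X (genSub Y l) (@cores X Y l f H).
Proof.
  intros [F [Fi F3]]. split; [|split].
  - apply cores_hom; auto.
  - intros x y E. apply Fi. apply (f_equal (@proj1_sig _ _)) in E. exact E.
  - intros r args Hr. apply F3. exact Hr.
Qed.

Lemma genSub_fg0 (X : str) l : forall l0, incl l0 l ->
  exists L : list (genSub X l), forall x, In x l0 -> exists p, In (exist _ x p) L.
Proof.
  induction l0 as [|a l0 IH]; intros Hi.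
  - exists nil. intros x [].
  - assert (Hi0 : incl l0 l) by (intros x Hx; apply Hi; now right). destruct (IH Hi0) as [L HL].
    assert (Ha : In a l) by (apply Hi; now left).
    exists (exist _ a (gen_in X l a Ha) :: L). intros x [<-|Hx].
    + exists (gen_in X l a Ha). now left.
    + destruct (HL x Hx) as [p Hp]. exists p. now right.
Qed.

Lemma genSub_fg (X : str) l : exists L : list (genSub X l), forall y, gen (genSub X l) L y.
Proof.
  destruct (genSub_fg0 X l l (incl_refl l)) as [L HL]. exists L.
  assert (forall x, gen X l x -> forall px, gen (genSub X l) L (exist _ x px)).
  { intros x H. induction H as [x Hx| fs args Ha IH]; intros px.
    - destruct (HL x Hx) as [p Hp]. apply gen_in. replace px with p by apply proof_irrelevance. exact Hp.
    - replace px with (@gen_fun _ X l fs args Ha) by apply proof_irrelevance.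
      exact (@gen_fun _ (genSub X l) L fs (fun i => exist _ (args i) (Ha i)) (fun i => IH i (Ha i))). }
  intros [x px]. auto.
Qed.

Lemma emb_comp (X Y Z : str) f g : is_emb X Y f -> is_emb Y Z g -> is_emb X Z (fun x => g (f x)).
Proof.
  intros Hf Hg. apply emb_on_T. apply (emb_on_comp X Y Z (fun _ => True) (fun _ => True)); try apply emb_emb_on; auto.
  intros ? ? ?; exact I.
Qed.
Lemma hom_comp (X Y Z : str) f g : is_hom X Y f -> is_hom Y Z g -> is_hom X Z (fun x => g (f x)).
Proof.
  intros Hf Hg. apply hom_on_T. apply (hom_on_comp X Y Z (fun _ => True) (fun _ => True)); try apply hom_hom_on; auto.
  intros ? ? ?; exact I.
Qed.

Section U.
Variable U : str.

Lemma age_gen l : age_of U (genSub U l).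
Proof. exists l. exists (fun x => x). split. apply id_emb. eauto. Qed.

Lemma age_emb A : age_of U A -> exists e : A -> U, is_emb A U e.
Proof.
  intros [s [j [Hj _]]]. exists (fun x => proj1_sig (j x)). apply (emb_comp _ _ _ j (fun x => proj1_sig x)); auto.
  apply proj_emb.
Qed.

Lemma age_fg A : age_of U A -> exists L : list A, forall x, gen A L x.
Proof.
  intros [s [j [Hj Hs]]]. destruct (genSub_fg U s) as [L' HL'].
  assert (exists L, map j L = L') as [L HL].
  { clear HL'. induction L' as [|y L' IH]. exists nil; auto.
    destruct IH as [L HL]. destruct (Hs y) as [x Hx]. exists (x :: L). simpl. subst. reflexivity. }
  exists L. intro x. subst L'.
  destruct (gen_image_inv A _ L j (hom_hom_on _ _ _ _ (proj1 Hj)) (j x) (HL' _)) as [x' [Hx' E]].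
  apply (proj1 (proj2 Hj)) in E. now subst.
Qed.

Hypothesis Uhom : homogeneous U.

Lemma homog' s p : emb_on U U (gen U s) p -> exists a, is_aut U a /\ forall x, gen U s x -> a x = p x.
Proof.
  intros Hp.
  assert (Hg : forall x : genSub U s, gen U (map p s) (p (proj1_sig x))).
  { intros [x px]. apply gen_image; auto. apply Hp. }
  set (i := cores _ _ Hg : genSub U s -> genSub U (map p s)).
  assert (Hi : is_iso (genSub U s) (genSub U (map p s)) i).
  { split. apply cores_emb. apply genSub_emb; auto.
    intros [y py]. destruct (gen_image_inv _ _ _ _ (proj1 Hp) y py) as [x [Hx E]].
    exists (exist _ x Hx). apply sig_eq. simpl. exact E. }
  destruct (Uhom s (map p s) i Hi) as [a [Ha Hax]].
  exists a. split; auto. intros x Hx. exact (Hax (exist _ x Hx)).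
Qed.

Lemma ext_emb B l phi : age_of U B -> emb_on B U (gen B l) phi ->
  exists psi, is_emb B U psi /\ forall x, gen B l x -> psi x = phi x.
Proof.
  intros HB Hphi. destruct (age_emb B HB) as [e He].
  pose (q := push (gen B l) e phi (fun y => y)).
  assert (Hq : emb_on U U (gen U (map e l)) q).
  { eapply emb_on_mono; [|apply push_emb; auto using gen_closed].
    - intros y Hy. apply (gen_image_inv B U l e); auto. apply hom_hom_on, He.
    - apply emb_emb_on, He. }
  destruct (homog' _ _ Hq) as [a [Ha Hax]].
  exists (fun x => a (e x)). split.
  - apply (emb_comp _ _ _ e a); auto. apply Ha.
  - intros x Hx. rewrite Hax.
    + unfold q. apply push_eq; [|exact Hx]. intros ? ? _ _; apply He.
    + apply gen_image; auto. apply hom_hom_on, He.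
Qed.

End U.

Lemma seq_build {St : Type} (Inv : St -> Prop) (R : nat -> St -> St -> Prop) (s0 : St) :
  Inv s0 -> (forall n s, Inv s -> exists s', Inv s' /\ R n s s') ->
  exists sq : nat -> St, sq 0 = s0 /\ forall n, Inv (sq n) /\ R n (sq n) (sq (S n)).
Proof.
  intros H0 Hs.
  pose (nx := fun n (s : {s | Inv s}) =>
     constructive_indefinite_description _ (Hs n (proj1_sig s) (proj2_sig s))).
  pose (F := fix F n : {s | Inv s} := match n with 0 => exist _ s0 H0
        | S k => exist _ (proj1_sig (nx k (F k))) (proj1 (proj2_sig (nx k (F k)))) end).
  exists (fun n => proj1_sig (F n)). split. reflexivity.
  intro n. split. exact (proj2_sig (F n)).
  simpl. exact (proj2 (proj2_sig (nx n (F n)))).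
Qed.

Lemma fin_bound n (F : Fin.t n -> nat) : exists m, forall i, F i <= m.
Proof.
  induction n.
  - exists 0. intro i. apply (Fin.case0 (fun i => F i <= 0) i).
  - destruct (IHn (fun i => F (FS i))) as [m Hm]. exists (max (F F1) m). intro i.
    pattern i; apply Fin.caseS'; [lia | intro j; specialize (Hm j); simpl in Hm; lia].
Qed.

Section Lim.
Variable X Y : Type.
Variable P : nat -> X -> Prop.
Hypothesis Pmono : forall n x, P n x -> P (S n) x.
Hypothesis Pall : forall x, exists n, P n x.

Lemma Pmono' n m x : n <= m -> P n x -> P m x.
Proof. induction 1; auto. Qed.

Lemma common_stage k (args : Fin.t k -> X) : exists m, forall i, P m (args i).
Proof.
  destruct (fin_choice k (fun i n => P n (args i)) (fun i => Pall (args i))) as [N HN].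
  destruct (fin_bound k N) as [m Hm]. exists m. intro i. apply (Pmono' (N i)); auto.
Qed.

Lemma limit_fun (f : nat -> X -> Y) : (forall n x, P n x -> f (S n) x = f n x) ->
  exists F : X -> Y, forall n x, P n x -> F x = f n x.
Proof.
  intros Hf.
  assert (Hf' : forall n m x, n <= m -> P n x -> f m x = f n x).
  { intros n m x H. induction H; auto. intro Hx. rewrite Hf; auto. apply (Pmono' n); auto. }
  exists (fun x => f (proj1_sig (constructive_indefinite_description _ (Pall x))) x).
  intros n x Hx. destruct (constructive_indefinite_description _ (Pall x)) as [k Hk]. simpl.
  rewrite <- (Hf' k (max k n) x); [apply Hf'; [lia|auto] | lia | auto].
Qed.
End Lim.

Section Lim2.
Variable X Y : str.
Variable P : nat -> X -> Prop.
Hypothesis Pmono : forall n x, P n x -> P (S n) x.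
Hypothesis Pall : forall x, exists n, P n x.

Lemma limit_emb (F : X -> Y) : (forall n, emb_on X Y (P n) F) -> is_emb X Y F.
Proof.
  intros HF. split; [split|split].
  - intros fs args. destruct (common_stage _ P Pmono Pall _ args) as [m Hm]. apply (HF m); auto.
  - intros r args Hr. destruct (common_stage _ P Pmono Pall _ args) as [m Hm]. apply (HF m); auto.
  - intros x y E. destruct (Pall x) as [n Hn], (Pall y) as [m Hm].
    apply (HF (max n m)); auto; [apply (Pmono' _ P Pmono n)|apply (Pmono' _ P Pmono m)]; try lia; auto.
  - intros r args Hr. destruct (common_stage _ P Pmono Pall _ args) as [m Hm]. apply (HF m); auto.
Qed.

Lemma limit_hom (F : X -> Y) : (forall n, hom_on X Y (P n) F) -> is_hom X Y F.
Proof.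
  intros HF. split.
  - intros fs args. destruct (common_stage _ P Pmono Pall _ args) as [m Hm]. apply (HF m); auto.
  - intros r args Hr. destruct (common_stage _ P Pmono Pall _ args) as [m Hm]. apply (HF m); auto.
Qed.
End Lim2.

Lemma hom_on_ext (X Y : str) P (f g : X -> Y) : closed X P -> (forall x, P x -> f x = g x) ->
  hom_on X Y P f -> hom_on X Y P g.
Proof.
  intros Hc E [F1 F2]. split.
  - intros fs args Ha. rewrite <- E by auto. rewrite F1 by auto. f_equal.
    apply functional_extensionality. auto.
  - intros r args Ha Hr. replace (fun i => g (args i)) with (fun i => f (args i)). auto.
    apply functional_extensionality. auto.
Qed.

Lemma emb_on_ext (X Y : str) P (f g : X -> Y) : closed X P -> (forall x, P x -> f x = g x) ->
  emb_on X Y P f -> emb_on X Y P g.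
Proof.
  intros Hc E [Hh [Hi H3]]. split; [|split].
  - eapply hom_on_ext; eauto.
  - intros x y Hx Hy. rewrite <- !E by auto. auto.
  - intros r args Ha Hr. apply H3; auto. replace (fun i => f (args i)) with (fun i => g (args i)). auto.
    apply functional_extensionality. intro; symmetry; auto.
Qed.

Lemma iso_emb (A B : str) f : is_iso A B f -> is_emb A B f.
Proof. now intros []. Qed.

Lemma iso_comp (A B D : str) f g : is_iso A B f -> is_iso B D g -> is_iso A D (fun x => g (f x)).
Proof.
  intros [Hf Sf] [Hg Sg]. split. apply emb_comp; auto.
  intro z. destruct (Sg z) as [y <-]. destruct (Sf y) as [x <-]. eauto.
Qed.

Lemma emb_on_iso (X Y : str) s p : emb_on X Y (gen X s) p -> isomorphic (genSub X s) (genSub Y (map p s)).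
Proof.
  intros Hp.
  assert (Hg : forall x : genSub X s, gen Y (map p s) (p (proj1_sig x))).
  { intros [x px]. apply gen_image; auto. apply Hp. }
  exists (cores _ _ Hg). split. apply cores_emb. apply genSub_emb; auto.
  intros [y py]. destruct (gen_image_inv _ _ _ _ (proj1 Hp) y py) as [x [Hx E]].
  exists (exist _ x Hx). apply sig_eq. simpl. exact E.
Qed.

Lemma iso_refl (A : str) : isomorphic A A.
Proof. exists (fun x => x). split. apply id_emb. eauto. Qed.

Lemma emb_age (U A : str) (e : A -> U) s : is_emb A U e -> age_of U (genSub A s).
Proof.
  intros He. destruct (emb_on_iso A U s e (emb_emb_on _ _ _ _ He)) as [j Hj].
  exists (map e s). exists j. exact Hj.
Qed.

Lemma age_sub (U A : str) s : age_of U A -> age_of U (genSub A s).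
Proof. intros HA. destruct (age_emb U A HA) as [e He]. eapply emb_age; eauto. Qed.

Lemma age_cbar (U A : str) : countable_str U -> age_of U A -> cbar (age_of U) A.
Proof.
  intros [c Hc] HA. destruct (age_emb U A HA) as [e He]. split.
  - exists (fun x => c (e x)). intros x y E. apply He. auto.
  - intros s. exists (genSub A s). split. apply age_sub; auto. apply iso_refl.
Qed.

Lemma cbar_sub (U A : str) s : cbar (age_of U) A -> age_of U (genSub A s).
Proof.
  intros [_ H]. destruct (H s) as [B [[t [j Hj]] [i Hi]]].
  exists t. exists (fun x => j (i x)). apply (iso_comp _ _ _ i j); auto.
Qed.

Lemma gen_all_image (X Y : str) (f : X -> Y) L l : is_hom X Y f -> (forall x, gen X L x) ->
  (forall y, In y (map f L) -> In y l) -> forall x, gen Y l (f x).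
Proof.
  intros Hf HL Hl x. apply (gen_mono Y (map f L)). intros y Hy. apply gen_in; auto.
  apply gen_image; auto. apply hom_hom_on; auto.
Qed.

Section Onlyif.
Variable U : str.
Hypothesis Uhom : homogeneous U.
Hypothesis Ucount : countable_str U.
Variable u : U -> U.
Hypothesis Hu : univ_hom_endo U u.

Lemma u_hom : is_hom U U u. Proof. apply Hu. Qed.

Lemma HAP_of_u : HAP (age_of U).
Proof.
  intros A B1 B2 f1 f2 HA HB1 HB2 Hf1 Hf2.
  destruct (age_emb U B2 HB2) as [e2 He2].
  destruct (age_emb U B1 HB1) as [e1 He1].
  destruct (proj1 (proj2 Hu) A (fun a => e2 (f2 a)) (age_cbar U A Ucount HA)) as [io [Hio Eio]].
  { apply hom_comp; auto. apply He2. }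
  destruct (age_fg U A HA) as [gA HgA].
  pose (phi := push (fun _ => True) f1 io e1).
  assert (Hphi : emb_on B1 U (gen B1 (map f1 gA)) phi).
  { eapply emb_on_mono; [|apply push_emb; try apply emb_emb_on; auto].
    - intros b Hb. destruct (gen_image_inv _ _ _ _ (hom_hom_on _ _ _ _ (proj1 Hf1)) b Hb) as [a [_ E]].
      exists a. auto.
    - intros ? ? ?; exact I. }
  destruct (ext_emb U Uhom B1 _ phi HB1 Hphi) as [k [Hk Ek]].
  assert (Ek' : forall a, k (f1 a) = io a).
  { intro a. rewrite Ek. unfold phi. apply push_eq; auto. intros ? ? _ _; apply Hf1.
    apply gen_image. apply hom_hom_on, Hf1. auto. }
  destruct (age_fg U B1 HB1) as [gB1 HgB1].
  destruct (age_fg U B2 HB2) as [gB2 HgB2].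
  pose (Dl := map e2 gB2 ++ map (fun b => u (k b)) gB1).
  assert (H2 : forall b, gen U Dl (e2 b)).
  { apply (gen_all_image _ _ _ gB2); auto. apply He2. intros y Hy. apply in_or_app; auto. }
  assert (Hku : is_hom B1 U (fun b => u (k b))).
  { apply hom_comp. apply Hk. apply u_hom. }
  assert (H1 : forall b, gen U Dl (u (k b))).
  { apply (gen_all_image _ _ (fun b => u (k b)) gB1); auto. intros y Hy. apply in_or_app; auto. }
  exists (genSub U Dl), (cores _ _ H1), (cores _ _ H2). split; [|split; [|split]].
  - apply age_gen.
  - apply cores_emb; auto.
  - apply cores_hom; auto.
  - intro a. apply sig_eq. simpl. rewrite Ek'. symmetry. apply Eio.
Qed.

Lemma AEP_of_u : AEP (age_of U).
Proof.
  intros A B1 B2 T f1 f2 h1 h2 HA HB1 HB2 HT Hf1 Hf2 Hh1 Hh2 Eh.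
  destruct (age_emb U T HT) as [eT HeT].
  destruct (proj1 (proj2 Hu) B1 (fun b => eT (h1 b)) (age_cbar U B1 Ucount HB1)) as [i1 [Hi1 Ei1]].
  { apply hom_comp; auto. apply HeT. }
  destruct (proj1 (proj2 Hu) B2 (fun b => eT (h2 b)) (age_cbar U B2 Ucount HB2)) as [i2 [Hi2 Ei2]].
  { apply hom_comp; auto. apply HeT. }
  destruct (age_fg U A HA) as [gA HgA].
  pose (s := map (fun a => i2 (f2 a)) gA).
  assert (He2 : is_emb A U (fun a => i2 (f2 a))) by (apply emb_comp; auto).
  assert (He1 : is_emb A U (fun a => i1 (f1 a))) by (apply emb_comp; auto).
  pose (p := push (fun _ => True) (fun a => i2 (f2 a)) (fun a => i1 (f1 a)) (fun y => y)).
  assert (Hp : emb_on U U (gen U s) p).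
  { eapply emb_on_mono; [|apply push_emb; try apply emb_emb_on; auto].
    - intros b Hb. destruct (gen_image_inv _ _ _ _ (hom_hom_on _ _ _ _ (proj1 He2)) b Hb) as [a [_ E]].
      exists a. auto.
    - intros ? ? ?; exact I. }
  assert (Ep : forall a, p (i2 (f2 a)) = i1 (f1 a)).
  { intro a. exact (push_eq _ (fun a : A => i2 (f2 a)) (fun a => i1 (f1 a)) (fun y => y) (fun x y _ _ E => proj1 (proj2 He2) x y E) a I). }
  destruct (proj2 (proj2 Hu) s (fun x => p (proj1_sig x)) (genSub_emb _ _ _ _ Hp)) as [al [Hal [Eal1 Eal2]]].
  { intros [y py]. simpl. destruct (gen_image_inv _ _ _ _ (hom_hom_on _ _ _ _ (proj1 He2)) y py) as [a [_ <-]].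
    rewrite Ep. rewrite <- Ei1, <- Ei2. rewrite Eh. reflexivity. }
  assert (Eal : forall a, al (i2 (f2 a)) = i1 (f1 a)).
  { intro a. rewrite <- Ep. apply (Eal2 (exist _ _ (gen_image _ _ _ _ (hom_hom_on _ _ _ _ (proj1 He2)) _ (HgA a)))). }
  assert (Hk2 : is_emb B2 U (fun b => al (i2 b))) by (apply emb_comp; auto; apply Hal).
  destruct (age_fg U B1 HB1) as [gB1 HgB1].
  destruct (age_fg U B2 HB2) as [gB2 HgB2].
  destruct (age_fg U T HT) as [gT HgT].
  pose (Dl := map i1 gB1 ++ map (fun b => al (i2 b)) gB2).
  assert (G1 : forall b, gen U Dl (i1 b)).
  { apply (gen_all_image _ _ _ gB1); auto. apply Hi1. intros y Hy. apply in_or_app; auto. }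
  assert (G2 : forall b, gen U Dl (al (i2 b))).
  { apply (gen_all_image _ _ (fun b => al (i2 b)) gB2); auto. apply Hk2. intros y Hy. apply in_or_app; auto. }
  pose (Tl := map eT gT ++ map u Dl).
  assert (GT : forall t, gen U Tl (eT t)).
  { apply (gen_all_image _ _ _ gT); auto. apply HeT. intros y Hy. apply in_or_app; auto. }
  assert (GH : forall d : genSub U Dl, gen U Tl (u (proj1_sig d))).
  { intros [d pd]. simpl. apply (gen_mono U (map u Dl)). intros y Hy. apply gen_in, in_or_app; auto.
    apply gen_image; auto. apply hom_hom_on, u_hom. }
  exists (genSub U Dl), (genSub U Tl), (cores _ _ G1), (cores _ _ G2), (cores _ _ GT), (cores _ _ GH).
  split; [apply age_gen|]. split; [apply age_gen|].
  split; [apply cores_emb; auto|]. split; [apply cores_emb; auto|].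
  split; [intro a; apply sig_eq; simpl; symmetry; apply Eal|].
  split; [apply cores_emb; auto|].
  split; [apply cores_hom; apply (genSub_hom U U Dl u), hom_hom_on, u_hom|].
  split.
  - intro b. apply sig_eq. simpl. symmetry. apply Ei1.
  - intro b. apply sig_eq. simpl. rewrite Eal1. symmetry. apply Ei2.
Qed.

End Onlyif.

Section Ifdir.
Variable U : str.
Hypothesis Uhom : homogeneous U.
Hypothesis Hage_AEP : AEP (age_of U).
Hypothesis Hage_HAP : HAP (age_of U).

Lemma embed_over (B D : str) (g : B -> D) (j : B -> U) : is_emb B D g -> is_emb B U j -> age_of U D ->
  (exists L, forall b, gen B L b) -> exists psi, is_emb D U psi /\ forall b, psi (g b) = j b.
Proof.
  intros Hg Hj HD [L HL]. destruct (age_emb U D HD) as [eD HeD].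
  pose (phi := push (fun _ => True) g j eD).
  assert (Hphi : emb_on D U (gen D (map g L)) phi).
  { eapply emb_on_mono; [|apply push_emb; try apply emb_emb_on; auto].
    - intros d Hd. destruct (gen_image_inv _ _ _ _ (hom_hom_on _ _ _ _ (proj1 Hg)) d Hd) as [b [_ E]].
      exists b. auto.
    - intros ? ? ?; exact I. }
  destruct (ext_emb U Uhom D _ phi HD Hphi) as [psi [Hpsi Epsi]].
  exists psi. split; auto. intro b. rewrite Epsi.
  - unfold phi. apply push_eq; auto. intros ? ? _ _; apply Hg.
  - apply gen_image; auto. apply hom_hom_on, Hg.
Qed.

Lemma stepA s f x : hom_on U U (gen U s) f ->
  exists f', hom_on U U (gen U (x :: s)) f' /\ forall y, gen U s y -> f' y = f y.
Proof.
  intros Hf.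
  assert (Hin : forall a : genSub U s, gen U (x :: s) (proj1_sig a)).
  { intro a. apply gen_cons. exact (proj2_sig a). }
  assert (Hf1 : is_emb (genSub U s) (genSub U (x :: s)) (cores _ _ Hin)).
  { apply cores_emb, proj_emb. }
  assert (Hin2 : forall a : genSub U s, gen U (map f s) (f (proj1_sig a))).
  { intro a. apply gen_image; auto. exact (proj2_sig a). }
  assert (Hf2 : is_hom (genSub U s) (genSub U (map f s)) (cores _ _ Hin2)).
  { apply cores_hom, genSub_hom; auto. }
  destruct (Hage_HAP _ _ _ _ _ (age_gen U s) (age_gen U (x :: s)) (age_gen U (map f s)) Hf1 Hf2)
    as [D [g1 [g2 [HD [Hg2 [Hg1 E]]]]]].
  destruct (embed_over _ D g2 (fun b => proj1_sig b) Hg2 (proj_emb _ _) HD (genSub_fg _ _)) as [psi [Hpsi Epsi]].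
  exists (extd (gen U (x :: s)) (fun b => psi (g1 b)) f). split.
  - apply hom_genSub. apply hom_comp; auto. apply Hpsi.
  - intros y Hy. rewrite (extd_eq _ _ _ _ (Hin (exist _ y Hy))).
    specialize (E (exist _ y Hy)). specialize (Epsi (cores _ _ Hin2 (exist _ y Hy))).
    unfold cores in E, Epsi. simpl in E, Epsi |- *. rewrite E. exact Epsi.
Qed.

Definition task_ok (s : list U) (f : U -> U) t r (phi g : U -> U) :=
  (forall x, gen U t x -> gen U s x) /\ emb_on U U (gen U t) phi /\ (forall x, gen U t x -> gen U r (phi x)) /\
  hom_on U U (gen U r) g /\ (forall x, gen U t x -> g (phi x) = f x).

Definition task_done (s' : list U) (f' : U -> U) t r (phi g : U -> U) :=
  exists k, emb_on U U (gen U r) k /\ (forall y, gen U r y -> gen U s' (k y) /\ f' (k y) = g y) /\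
    (forall x, gen U t x -> k (phi x) = x).

Lemma stepB s f t r phi g : hom_on U U (gen U s) f -> task_ok s f t r phi g ->
  exists s' f', (forall y, gen U s y -> gen U s' y) /\ (forall y, gen U s y -> f' y = f y) /\
    hom_on U U (gen U s') f' /\ task_done s' f' t r phi g.
Proof.
  intros Hf [Hts [Hphi [Hphir [Hg Hgf]]]].
  assert (Hin : forall a : genSub U t, gen U s (proj1_sig a)).
  { intro a. apply Hts. exact (proj2_sig a). }
  assert (Hf1 : is_emb (genSub U t) (genSub U s) (cores _ _ Hin)).
  { apply cores_emb, proj_emb. }
  assert (Hin2 : forall a : genSub U t, gen U r (phi (proj1_sig a))).
  { intro a. apply Hphir. exact (proj2_sig a). }
  assert (Hf2 : is_emb (genSub U t) (genSub U r) (cores _ _ Hin2)).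
  { apply cores_emb, genSub_emb; auto. }
  pose (Tl := map f s ++ map g r).
  assert (Hh1' : forall b : genSub U s, gen U Tl (f (proj1_sig b))).
  { intro b. apply gen_app_l. apply gen_image; auto. exact (proj2_sig b). }
  assert (Hh2' : forall b : genSub U r, gen U Tl (g (proj1_sig b))).
  { intro b. apply gen_app_r. apply gen_image; auto. exact (proj2_sig b). }
  assert (Hh1 : is_hom (genSub U s) (genSub U Tl) (cores _ _ Hh1')).
  { apply cores_hom, genSub_hom; auto. }
  assert (Hh2 : is_hom (genSub U r) (genSub U Tl) (cores _ _ Hh2')).
  { apply cores_hom, genSub_hom; auto. }
  destruct (Hage_AEP _ _ _ _ _ _ _ _ (age_gen U t) (age_gen U s) (age_gen U r) (age_gen U Tl) Hf1 Hf2 Hh1 Hh2)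
    as [D [T' [g1 [g2 [k [h [HD [HT' [Hg1 [Hg2 [E12 [Hk [Hh [Eh1 Eh2]]]]]]]]]]]]]].
  { intro a. apply sig_eq. simpl. symmetry. apply Hgf. exact (proj2_sig a). }
  destruct (embed_over _ T' k (fun b => proj1_sig b) Hk (proj_emb _ _) HT' (genSub_fg _ _)) as [psT [HpsT EpsT]].
  destruct (embed_over _ D g1 (fun b => proj1_sig b) Hg1 (proj_emb _ _) HD (genSub_fg _ _)) as [psD [HpsD EpsD]].
  destruct (age_fg U D HD) as [LD HLD].
  assert (HpsDi : forall x y, True -> True -> psD x = psD y -> x = y).
  { intros ? ? _ _; apply HpsD. }
  exists (map psD LD), (push (fun _ => True) psD (fun d => psT (h d)) f).
  assert (Hin' : forall d, gen U (map psD LD) (psD d)).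
  { intro d. apply gen_image; auto. apply hom_hom_on, HpsD. }
  split; [|split; [|split]].
  - intros y Hy. pose proof (EpsD (exist _ y Hy)) as E; simpl in E. rewrite <- E. apply Hin'.
  - intros y Hy. pose proof (EpsD (exist _ y Hy)) as E; simpl in E. rewrite <- E. rewrite push_eq by auto.
    rewrite Eh1. rewrite EpsT. simpl. rewrite E. reflexivity.
  - eapply hom_on_mono; [|apply push_hom].
    + intros y Hy. destruct (gen_image_inv _ _ _ _ (hom_hom_on _ _ _ _ (proj1 HpsD)) y Hy) as [d [_ E]].
      exists d. auto.
    + apply emb_emb_on; auto.
    + apply hom_hom_on. apply hom_comp; auto. apply HpsT.
    + intros ? ? ?; exact I.
  - exists (extd (gen U r) (fun b => psD (g2 b)) (fun y => y)). split; [|split].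
    + apply emb_genSub. apply emb_comp; auto.
    + intros y Hy. rewrite (extd_eq _ _ _ _ Hy). split; auto.
      rewrite push_eq by auto. rewrite Eh2. rewrite EpsT. reflexivity.
    + intros x Hx. rewrite (extd_eq _ _ _ _ (Hin2 (exist _ x Hx))).
      specialize (E12 (exist _ x Hx)). unfold cores in E12 |- *. simpl in E12 |- *.
      rewrite <- E12. rewrite EpsD. reflexivity.
Qed.

End Ifdir.

Section Constr.
Variable U : str.
Hypothesis Uhom : homogeneous U.
Hypothesis Hage_AEP : AEP (age_of U).
Hypothesis Hage_HAP : HAP (age_of U).
Variable c : U -> nat.
Hypothesis Hc : forall x y, c x = c y -> x = y.

Fixpoint lcode (l : list U) : nat :=
  match l with nil => 0 | x :: l' => S (Cantor.to_nat (c x, lcode l')) end.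

Lemma lcode_inj l l' : lcode l = lcode l' -> l = l'.
Proof.
  revert l'. induction l as [|x l IH]; intros [|y l'] E; try discriminate; auto.
  change (S (Cantor.to_nat (c x, lcode l)) = S (Cantor.to_nat (c y, lcode l'))) in E.
  apply (f_equal pred) in E.
  change (Cantor.to_nat (c x, lcode l) = Cantor.to_nat (c y, lcode l')) in E.
  apply (f_equal Cantor.of_nat) in E. rewrite !Cantor.cancel_of_to in E.
  injection E as E1 E2. f_equal; auto.
Qed.

Definition tcode t r vp vg := Cantor.to_nat (Cantor.to_nat (lcode t, lcode r), Cantor.to_nat (lcode vp, lcode vg)).

Lemma tcode_inj t r vp vg t' r' vp' vg' : tcode t r vp vg = tcode t' r' vp' vg' ->
  t = t' /\ r = r' /\ vp = vp' /\ vg = vg'.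
Proof.
  unfold tcode. intro E. apply (f_equal Cantor.of_nat) in E. rewrite !Cantor.cancel_of_to in E.
  pose proof (f_equal fst E) as E1. pose proof (f_equal snd E) as E2. cbn [fst snd] in E1, E2.
  apply (f_equal Cantor.of_nat) in E1, E2. rewrite !Cantor.cancel_of_to in E1, E2.
  pose proof (f_equal fst E1) as F1. pose proof (f_equal snd E1) as F2.
  pose proof (f_equal fst E2) as F3. pose proof (f_equal snd E2) as F4. cbn [fst snd] in F1, F2, F3, F4.
  repeat split; apply lcode_inj; auto.
Qed.

Lemma map_eq_in {A B : Type} (f g : A -> B) l : map f l = map g l -> forall x, In x l -> f x = g x.
Proof.
  induction l as [|a l IH]; simpl; intros E x Hx. destruct Hx.
  injection E as E1 E2. destruct Hx as [<-|Hx]; auto.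
Qed.

Lemma task_done_transfer s f t r phi g phi0 g0 : task_done U s f t r phi0 g0 ->
  (forall x, gen U t x -> phi x = phi0 x) -> (forall y, gen U r y -> g y = g0 y) -> task_done U s f t r phi g.
Proof.
  intros [k [Hk [Hk1 Hk2]]] Ep Eg. exists k. split; [|split]; auto.
  - intros y Hy. rewrite Eg by auto. auto.
  - intros x Hx. rewrite Ep by auto. auto.
Qed.

Lemma task_done_mono s f s' f' t r phi g : task_done U s f t r phi g ->
  (forall y, gen U s y -> gen U s' y) -> (forall y, gen U s y -> f' y = f y) -> task_done U s' f' t r phi g.
Proof.
  intros [k [Hk [Hk1 Hk2]]] Hs Ef. exists k. split; [|split]; auto.
  intros y Hy. destruct (Hk1 y Hy) as [H1 H2]. split; auto. rewrite Ef; auto.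
Qed.

Definition Rstep (n : nat) (st st' : list U * (U -> U)) : Prop :=
  let (s, f) := st in let (s', f') := st' in
  (forall y, gen U s y -> gen U s' y) /\ (forall y, gen U s y -> f' y = f y) /\
  (forall y, c y = n -> gen U s' y) /\
  (forall t r phi g, task_ok U s f t r phi g -> tcode t r (map phi t) (map g r) = fst (Cantor.of_nat n) ->
     task_done U s' f' t r phi g).

Definition Inv (st : list U * (U -> U)) : Prop := hom_on U U (gen U (fst st)) (snd st).

Lemma step n st : Inv st -> exists st', Inv st' /\ Rstep n st st'.
Proof.
  destruct st as [s f]. unfold Inv; simpl. intro Hf.
  assert (HB : exists s1 f1, hom_on U U (gen U s1) f1 /\ (forall y, gen U s y -> gen U s1 y) /\
     (forall y, gen U s y -> f1 y = f y) /\
     (forall t r phi g, task_ok U s f t r phi g -> tcode t r (map phi t) (map g r) = fst (Cantor.of_nat n) ->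
     task_done U s1 f1 t r phi g)).
  { destruct (classic (exists t r phi g, task_ok U s f t r phi g /\ tcode t r (map phi t) (map g r) = fst (Cantor.of_nat n)))
      as [[t0 [r0 [phi0 [g0 [Hok0 Ec0]]]]]|Hno].
    - destruct (stepB U Uhom Hage_AEP s f t0 r0 phi0 g0 Hf Hok0) as [s1 [f1 [Hs1 [Ef1 [Hf1 Hd]]]]].
      exists s1, f1. split; [|split; [|split]]; auto.
      intros t r phi g Hok Ec. rewrite <- Ec0 in Ec. apply tcode_inj in Ec. destruct Ec as [-> [-> [Ep Eg]]].
      apply (task_done_transfer _ _ _ _ _ _ phi0 g0); auto.
      + apply agree_gen. apply Hok. apply Hok0. apply map_eq_in; auto.
      + apply agree_gen. apply Hok. apply Hok0. apply map_eq_in; auto.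
    - exists s, f. split; [|split; [|split]]; auto.
      intros t r phi g Hok Ec. exfalso. apply Hno. eauto 10. }
  destruct HB as [s1 [f1 [Hf1 [Hs1 [Ef1 Hd1]]]]].
  destruct (classic (exists x, c x = n)) as [[x Hx]|Hno].
  - destruct (stepA U Uhom Hage_HAP s1 f1 x Hf1) as [f2 [Hf2 Ef2]].
    exists (x :: s1, f2). simpl. split; auto. split; [|split; [|split]].
    + intros y Hy. apply gen_cons. auto.
    + intros y Hy. rewrite Ef2 by auto. auto.
    + intros y Hy. apply gen_in. left. apply Hc. congruence.
    + intros t r phi g Hok Ec. apply (task_done_mono s1 f1); auto.
      intros y Hy; apply gen_cons; auto.
  - exists (s1, f1). simpl. split; auto. split; [|split; [|split]]; auto.
    intros y Hy. exfalso. eauto.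
Qed.

Definition STAR (u : U -> U) : Prop :=
  forall t r phi g, emb_on U U (gen U t) phi -> (forall x, gen U t x -> gen U r (phi x)) ->
    hom_on U U (gen U r) g -> (forall x, gen U t x -> g (phi x) = u x) ->
    exists k, emb_on U U (gen U r) k /\ (forall y, gen U r y -> u (k y) = g y) /\
      (forall x, gen U t x -> k (phi x) = x).

Lemma exists_u : exists u, is_hom U U u /\ STAR u.
Proof.
  assert (H0 : Inv (nil, fun x => x)).
  { unfold Inv. simpl. apply hom_hom_on. apply id_emb. }
  destruct (seq_build Inv Rstep _ H0 step) as [sq [Hsq0 Hsq]].
  pose (P := fun n x => gen U (fst (sq n)) x).
  assert (Pmono : forall n x, P n x -> P (S n) x).
  { intros n x. unfold P. specialize (Hsq n). destruct Hsq as [_ HR].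
    destruct (sq n) as [s f], (sq (S n)) as [s' f']. apply HR. }
  assert (Pall : forall x, exists n, P n x).
  { intros x. exists (S (c x)). unfold P. specialize (Hsq (c x)). destruct Hsq as [_ HR].
    destruct (sq (c x)) as [s f], (sq (S (c x))) as [s' f']. apply HR. auto. }
  destruct (limit_fun _ _ P Pmono Pall (fun n => snd (sq n))) as [u Hu].
  { intros n x. unfold P. specialize (Hsq n). destruct Hsq as [_ HR].
    destruct (sq n) as [s f], (sq (S n)) as [s' f']. apply HR. }
  assert (Hun : forall n, hom_on U U (P n) u).
  { intro n. apply (hom_on_ext U U (P n) (snd (sq n))). apply gen_closed.
    intros; symmetry; auto. apply Hsq. }
  exists u. split.
  - apply (limit_hom U U P Pmono Pall); auto.
  - intros t r phi g Hphi Hphir Hg Hgu.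
    assert (Hst : exists m, forall x, In x t -> P m x).
    { clear Hphi Hphir Hgu. induction t as [|a t IH]. exists 0. intros x [].
      destruct IH as [m Hm]. destruct (Pall a) as [m' Hm'].
      exists (max m m'). intros x [<-|Hx]; [apply (Pmono' _ P Pmono m')|apply (Pmono' _ P Pmono m)]; auto; lia. }
    destruct Hst as [m Hm].
    pose (K := tcode t r (map phi t) (map g r)).
    pose (n := Cantor.to_nat (K, m)).
    assert (Hmn : m <= n) by (pose proof (Cantor.to_nat_non_decreasing K m); unfold n; lia).
    assert (HK : fst (Cantor.of_nat n) = K) by (unfold n; rewrite Cantor.cancel_of_to; reflexivity).
    assert (Htn : forall x, gen U t x -> P n x).
    { apply gen_min. apply gen_closed. intros x Hx. apply (Pmono' _ P Pmono m); auto. }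
    specialize (Hsq n). destruct Hsq as [_ HR].
    assert (HPn : forall x, P n x -> u x = snd (sq n) x) by auto.
    assert (HPSn : forall x, P (S n) x -> u x = snd (sq (S n)) x) by auto.
    unfold P in Htn, HPn, HPSn. destruct (sq n) as [s f], (sq (S n)) as [s' f']. simpl in *.
    destruct HR as [_ [_ [_ HR]]].
    destruct (HR t r phi g) as [k [Hk [Hk1 Hk2]]].
    + split; [|split; [|split; [|split]]]; auto. intros x Hx. rewrite Hgu by auto. auto.
    + rewrite HK. reflexivity.
    + exists k. split; [|split]; auto. intros y Hy. destruct (Hk1 y Hy). rewrite HPSn; auto.
Qed.

End Constr.

Section Univ.
Variable U : str.
Variable c : U -> nat.
Hypothesis Hc : forall x y, c x = c y -> x = y.
Variable u : U -> U.
Hypothesis Huh : is_hom U U u.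
Hypothesis Hstar : STAR U u.

Definition InvP (st : list U * (U -> U)) : Prop :=
  emb_on U U (gen U (fst st)) (snd st) /\ (forall x, gen U (fst st) x -> u (snd st x) = u x).

Lemma gen_img_iff (X Y : str) l (f : X -> Y) : hom_on X Y (gen X l) f -> forall y, img (gen X l) f y -> gen Y (map f l) y.
Proof. intros Hf y H. apply img_gen; auto. Qed.

Lemma invP a p : InvP (a, p) ->
  InvP (map p a, push (gen U a) p (fun z => z) (fun z => z)) /\
  (forall z, gen U a z -> push (gen U a) p (fun z => z) (fun z => z) (p z) = z) /\
  (forall y, gen U (map p a) y -> p (push (gen U a) p (fun z => z) (fun z => z) y) = y).
Proof.
  intros [Hp Hu]. simpl in *.
  assert (Hpi : forall x y, gen U a x -> gen U a y -> p x = p y -> x = y) by apply Hp.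
  assert (Hq : forall z, gen U a z -> push (gen U a) p (fun z => z) (fun z => z) (p z) = z).
  { intros z Hz. apply push_eq; auto. }
  split; [split|split]; auto.
  - simpl. eapply emb_on_mono; [|apply push_emb; auto using gen_closed].
    + intros y Hy. apply (gen_image_inv _ _ _ _ (proj1 Hp)); auto.
    + apply emb_emb_on, id_emb.
  - simpl. intros y Hy. destruct (gen_image_inv _ _ _ _ (proj1 Hp) y Hy) as [z [Hz <-]].
    rewrite Hq by auto. symmetry; auto.
  - intros y Hy. destruct (gen_image_inv _ _ _ _ (proj1 Hp) y Hy) as [z [Hz <-]].
    rewrite Hq; auto.
Qed.

Lemma forth a p x : InvP (a, p) -> exists p', InvP (x :: a, p') /\ forall z, gen U a z -> p' z = p z.
Proof.
  intros HI. destruct (invP a p HI) as [[Hq Huq] [Hqp Hpq]]. simpl in Hq, Huq.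
  destruct HI as [Hp Hu]. simpl in Hp, Hu.
  set (q := push (gen U a) p (fun z => z) (fun z => z)) in *.
  destruct (Hstar (map p a) (x :: a) q u Hq) as [k [Hk [Hku Hkq]]].
  - intros y Hy. destruct (gen_image_inv _ _ _ _ (proj1 Hp) y Hy) as [z [Hz <-]].
    rewrite Hqp by auto. apply gen_cons; auto.
  - apply hom_hom_on; auto.
  - auto.
  - exists k. split; [split|].
    + exact Hk.
    + exact Hku.
    + intros z Hz. rewrite <- (Hqp z Hz) at 1. apply Hkq. apply gen_image; auto. apply Hp.
Qed.

Lemma back a p y : InvP (a, p) -> exists a' p', InvP (a', p') /\ (forall z, gen U a z -> p' z = p z) /\
  (forall z, gen U a z -> gen U a' z) /\ img (gen U a') p' y.
Proof.
  intros HI. destruct (invP a p HI) as [HIq [Hqp Hpq]].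
  set (q := push (gen U a) p (fun z => z) (fun z => z)) in *.
  destruct (forth _ _ y HIq) as [q' [HIq' Eq']].
  destruct (invP _ _ HIq') as [HIp'' [Hq'p Hpq']].
  set (p'' := push (gen U (y :: map p a)) q' (fun z => z) (fun z => z)) in *.
  destruct HI as [Hp Hu]; simpl in Hp, Hu.
  assert (Hpa : forall z, gen U a z -> gen U (map p a) (p z)).
  { intros z Hz. apply gen_image; auto. apply Hp. }
  assert (Eqp : forall z, gen U a z -> q' (p z) = z).
  { intros z Hz. rewrite Eq' by auto. auto. }
  exists (map q' (y :: map p a)), p''. split; [exact HIp''|split; [|split]].
  - intros z Hz. rewrite <- (Eqp z Hz) at 1. apply Hq'p. apply gen_cons; auto.
  - intros z Hz. rewrite <- (Eqp z Hz). apply gen_image. apply HIq'. apply gen_cons; auto.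
  - exists (q' y). split. apply gen_image. apply HIq'. apply gen_in; left; auto.
    apply Hq'p. apply gen_in; left; auto.
Qed.

Definition Rbf (n : nat) (st st' : list U * (U -> U)) : Prop :=
  let (a, p) := st in let (a', p') := st' in
  (forall z, gen U a z -> gen U a' z) /\ (forall z, gen U a z -> p' z = p z) /\
  (forall y, c y = n -> gen U a' y /\ img (gen U a') p' y).

Lemma step_bf n st : InvP st -> exists st', InvP st' /\ Rbf n st st'.
Proof.
  destruct st as [a p]. intro HI.
  destruct (classic (exists y, c y = n)) as [[y Hy]|Hno].
  - destruct (forth a p y HI) as [p1 [HI1 E1]].
    destruct (back _ _ y HI1) as [a2 [p2 [HI2 [E2 [S2 I2]]]]].
    exists (a2, p2). split; auto. split; [|split].
    + intros z Hz. apply S2, gen_cons; auto.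
    + intros z Hz. rewrite E2 by (apply gen_cons; auto). auto.
    + intros y' Hy'. assert (y' = y) by (apply Hc; congruence). subst y'.
      split; auto. apply S2. apply gen_in; left; auto.
  - exists (a, p). split; auto. split; [|split]; auto. intros y Hy. exfalso; eauto.
Qed.

Lemma clause3 (s : list U) (io : genSub U s -> U) : is_emb (genSub U s) U io ->
  (forall a, u (io a) = u (proj1_sig a)) ->
  exists al : U -> U, is_aut U al /\ (forall x, u (al x) = u x) /\ forall a, al (proj1_sig a) = io a.
Proof.
  intros Hio Huio.
  assert (H0 : InvP (s, extd (gen U s) io (fun z => z))).
  { split; simpl. apply emb_genSub; auto. intros x Hx. rewrite (extd_eq _ _ _ _ Hx). apply Huio. }
  destruct (seq_build InvP Rbf _ H0 step_bf) as [sq [Hsq0 Hsq]].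
  pose (P := fun n x => gen U (fst (sq n)) x).
  assert (Pmono : forall n x, P n x -> P (S n) x).
  { intros n x. unfold P. specialize (Hsq n). destruct Hsq as [_ HR].
    destruct (sq n) as [a p], (sq (S n)) as [a' p']. apply HR. }
  assert (Pall : forall x, exists n, P n x).
  { intros x. exists (S (c x)). unfold P. specialize (Hsq (c x)). destruct Hsq as [_ HR].
    destruct (sq (c x)) as [a p], (sq (S (c x))) as [a' p']. apply HR. auto. }
  destruct (limit_fun _ _ P Pmono Pall (fun n => snd (sq n))) as [al Hal].
  { intros n x. unfold P. specialize (Hsq n). destruct Hsq as [_ HR].
    destruct (sq n) as [a p], (sq (S n)) as [a' p']. apply HR. }
  assert (Hemb : forall n, emb_on U U (P n) al).
  { intro n. apply (emb_on_ext U U (P n) (snd (sq n))). apply gen_closed.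
    intros; symmetry; auto. apply Hsq. }
  exists al. split; [split|split].
  - apply (limit_emb U U P Pmono Pall); auto.
  - intro y. specialize (Hsq (c y)). destruct Hsq as [_ HR].
    pose proof (Hal (S (c y))) as HalS. unfold P in HalS.
    destruct (sq (c y)) as [a p], (sq (S (c y))) as [a' p']. simpl in HalS.
    destruct HR as [_ [_ HR]]. destruct (HR y eq_refl) as [_ [z [Hz <-]]].
    exists z. auto.
  - intro x. destruct (Pall x) as [n Hn]. rewrite (Hal n x Hn). apply (proj2 (proj1 (Hsq n))). exact Hn.
  - intros [x px]. simpl. rewrite (Hal 0 x). rewrite Hsq0. simpl. apply extd_eq.
    unfold P. rewrite Hsq0. exact px.
Qed.

Lemma clause2 (A : str) (h : A -> U) : cbar (age_of U) A -> is_hom A U h ->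
  exists io : A -> U, is_emb A U io /\ forall a, h a = u (io a).
Proof.
  intros HA Hh. destruct HA as [[cA HcA] HAs].
  pose (Inv2 := fun st : list A * (A -> U) => emb_on A U (gen A (fst st)) (snd st) /\
     forall x, gen A (fst st) x -> u (snd st x) = h x).
  pose (R2 := fun (n : nat) (st st' : list A * (A -> U)) =>
     (forall z, gen A (fst st) z -> gen A (fst st') z) /\ (forall z, gen A (fst st) z -> snd st' z = snd st z) /\
     (forall x, cA x = n -> gen A (fst st') x)).
  assert (Hage : forall l, age_of U (genSub A l)) by (intro l; apply cbar_sub; split; [exists cA|]; auto).
  assert (Hext : forall l x io, Inv2 (l, io) -> exists io', Inv2 (x :: l, io') /\ forall z, gen A l z -> io' z = io z).
  { intros l x io [Hio Huio]. simpl in Hio, Huio.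
    destruct (age_emb U _ (Hage (x :: l))) as [psi0 Hpsi0].
    pose (psi := extd (gen A (x :: l)) psi0 h).
    assert (Hpsi : emb_on A U (gen A (x :: l)) psi) by (apply emb_genSub; auto).
    assert (Hpsil : emb_on A U (gen A l) psi) by (eapply emb_on_mono; [|exact Hpsi]; intros; apply gen_cons; auto).
    pose (phi := push (gen A l) io psi (fun z => z)).
    pose (g := push (gen A (x :: l)) psi h (fun z => z)).
    assert (Hioi : forall a b, gen A l a -> gen A l b -> io a = io b -> a = b) by apply Hio.
    assert (Hpsii : forall a b, gen A (x :: l) a -> gen A (x :: l) b -> psi a = psi b -> a = b) by apply Hpsi.
    assert (Ephi : forall z, gen A l z -> phi (io z) = psi z) by (intros; unfold phi; apply push_eq; auto).
    assert (Eg : forall z, gen A (x :: l) z -> g (psi z) = h z) by (intros; unfold g; apply push_eq; auto).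
    destruct (Hstar (map io l) (map psi (x :: l)) phi g) as [k [Hk [Hku Hkphi]]].
    - eapply emb_on_mono; [|apply push_emb; auto using gen_closed].
      intros y Hy. apply (gen_image_inv _ _ _ _ (proj1 Hio)); auto.
    - intros y Hy. destruct (gen_image_inv _ _ _ _ (proj1 Hio) y Hy) as [z [Hz <-]].
      rewrite Ephi by auto. apply gen_image. apply Hpsi. apply gen_cons; auto.
    - eapply hom_on_mono; [|apply push_hom; auto using gen_closed].
      + intros y Hy. apply (gen_image_inv _ _ _ _ (proj1 Hpsi)); auto.
      + apply hom_hom_on; auto.
    - intros y Hy. destruct (gen_image_inv _ _ _ _ (proj1 Hio) y Hy) as [z [Hz <-]].
      rewrite Ephi by auto. rewrite Eg by (apply gen_cons; auto). symmetry; auto.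
    - exists (fun z => k (psi z)). split; [split|].
      + simpl. eapply emb_on_comp; eauto using gen_closed.
        intros z Hz. apply gen_image; auto. apply Hpsi.
      + simpl. intros z Hz. rewrite Hku. apply Eg; auto. apply gen_image; auto. apply Hpsi.
      + intros z Hz. rewrite <- Ephi by auto. apply Hkphi. apply gen_image; auto. apply Hio. }
  assert (H0 : exists io0, Inv2 (nil, io0)).
  { destruct (age_emb U _ (Hage nil)) as [psi0 Hpsi0].
    exists (extd (gen A nil) psi0 h). split; simpl. apply emb_genSub; auto.
    apply agree_gen.
    - apply (hom_on_comp A U U _ (fun _ => True)). apply hom_genSub, Hpsi0. apply hom_hom_on; auto.
      intros; exact I. apply gen_closed.
    - apply hom_hom_on; auto.
    - intros x []. }
  destruct H0 as [io0 H0].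
  assert (Hstep : forall n st, Inv2 st -> exists st', Inv2 st' /\ R2 n st st').
  { intros n [l io] HI. destruct (classic (exists x, cA x = n)) as [[x Hx]|Hno].
    - destruct (Hext l x io HI) as [io' [HI' E']]. exists (x :: l, io'). split; auto.
      split; [|split]; simpl; auto.
      + intros; apply gen_cons; auto.
      + intros y Hy. apply gen_in. left. apply HcA. congruence.
    - exists (l, io). split; auto. split; [|split]; simpl; auto. intros y Hy; exfalso; eauto. }
  destruct (seq_build Inv2 R2 _ H0 Hstep) as [sq [Hsq0 Hsq]].
  pose (P := fun n x => gen A (fst (sq n)) x).
  assert (Pmono : forall n x, P n x -> P (S n) x) by (intros n x; apply (Hsq n)).
  assert (Pall : forall x, exists n, P n x) by (intros x; exists (S (cA x)); apply (Hsq (cA x)); auto).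
  destruct (limit_fun _ _ P Pmono Pall (fun n => snd (sq n))) as [io Hio].
  { intros n x; apply (Hsq n). }
  assert (Hemb : forall n, emb_on A U (P n) io).
  { intro n. apply (emb_on_ext A U (P n) (snd (sq n))). apply gen_closed.
    intros; symmetry; auto. apply Hsq. }
  exists io. split.
  - apply (limit_emb A U P Pmono Pall); auto.
  - intro x. destruct (Pall x) as [n Hn]. rewrite (Hio n x Hn). symmetry. apply (proj2 (proj1 (Hsq n))). exact Hn.
Qed.

End Univ.
End Infra.

Theorem proposition4p7 (sg : signature) (C : structure sg -> Prop) (U : structure sg) :
  fraisse_class C -> fraisse_limit C U ->
  ((exists u : U -> U, univ_hom_endo U u) <-> (AEP C /\ HAP C)).
Proof.
  intros [HCage HCamal] [Ucount [Uhom HCU]].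
  assert (EC : C = age_of U).
  { apply functional_extensionality. intro A. apply propositional_extensionality. apply HCU. }
  subst C. split.
  - intros [u Hu]. split.
    + eapply AEP_of_u; eauto.
    + eapply HAP_of_u; eauto.
  - intros [Ha Hh]. destruct Ucount as [c Hc].
    destruct (exists_u sg U Uhom Ha Hh c) as [u [Huh Hst]]; auto.
    exists u. split; [exact Huh|split].
    + intros A h HA Hh'. eapply clause2; eauto.
    + intros s io Hio Hu'. eapply clause3; eauto.
Qed.
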